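(* Let $\tfrac12<\sigma<1$. Then, as $n\to\infty$, $$\frac{1}{n^{2(1-\sigma)}}\int_0^1\Big|\sum_{k=1}^n\frac{1}{k^{\sigma+it}}\Big|^2dt=\frac{1}{1-\sigma}\arctan\Big(\frac{1}{1-\sigma}\Big)+O_\sigma\Big(\frac{1}{n^{2(1-\sigma)/3}}\Big).$$ *)

(* Defs.v *)
From Stdlib Require Import Reals.
From Coquelicot Require Import Coquelicot.
Open Scope R_scope.

(* Complex power k^{-s} := exp(-s * ln k) for a positive integer k and s in C,
   written out: exp(-(a+ib) ln k) = k^{-a} (cos(b ln k) - i sin(b ln k)). *)
Definition nat_cpow_neg (k : nat) (s : C) : C :=
  let L := ln (INR k) in
  (exp (- Re s * L) * cos (Im s * L), - (exp (- Re s * L) * sin (Im s * L))).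

Fixpoint dirichlet_sum (n : nat) (s : C) : C :=
  match n with
  | O => 0%C
  | S m => Cplus (dirichlet_sum m s) (nat_cpow_neg (S m) s)
  end.

(* Main.v *)
Require Import Defs.
From Stdlib Require Import Reals Lra Psatz.
From Coquelicot Require Import Coquelicot.
Open Scope R_scope.
Lemma sinlb x : 0 <= x <= 1 -> x - x^3/6 <= sin x <= x.
Proof. intros H. destruct (pre_sin_bound x 0) as [H1 H2]; try lra.
split.
- unfold sin_approx, sin_term in H1. simpl in H1. unfold INR in H1. simpl in H1. lra.
- destruct (Req_dec x 0). subst. rewrite sin_0. lra. left. apply sin_lt_x. lra.
Qed.
Lemma coslb x : 0 <= x <= 1 -> 1 - x^2/2 <= cos x <= 1.
Proof. intros H. destruct (pre_cos_bound x 0) as [H1 H2]; try lra.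
split.
- unfold cos_approx, cos_term in H1. simpl in H1. unfold INR in H1. simpl in H1. lra.
- apply COS_bound.
Qed.

Lemma XY_bounds a t u m E co si : 0 < a < 1/2 -> 0 <= t <= 1 -> 0 < m <= 1/2 ->
  m <= u <= 2*m -> u - m <= 2*m^2 -> u <= 1 ->
  1 - a*u <= E -> E*(1+a*u) <= 1 ->
  1 - (t*u)^2/2 <= co <= 1 -> (t*u) - (t*u)^3/6 <= si <= t*u ->
  Rabs (1 - E*co - a*m) <= 4*m^2 /\ Rabs (E*si - t*m) <= 8*m^2.
Proof.
  intros Ha Ht Hm Hu Hum Hu1 HE1 HE2 Hco Hsi.
  assert (HE0 : 0 <= E) by nra.
  assert (HE3 : E <= 1 - a*u + (a*u)^2).
  { assert (0 <= a*u) by nra. set (w := a*u) in *.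
    assert (0 <= 1 - w + w^2) by nra.
    assert (E*(1+w)*(1 - w + w^2) <= 1 - w + w^2) by (rewrite <- (Rmult_1_l (1 - w + w^2)) at 2; apply Rmult_le_compat_r; lra).
    assert (E*(1+w)*(1 - w + w^2) = E + E*w^3) by ring.
    assert (0 <= E*w^3) by (apply Rmult_le_pos; [lra| apply pow_le; lra]). lra. }
  assert (0 <= u) by lra. assert (Htu : 0 <= t*u <= 1) by (split; [apply Rmult_le_pos; lra | nra]).
  assert (Hu2 : u^2 <= 4*m^2) by nra.
  assert (Htu2 : (t*u)^2 <= u^2).
  { assert (t^2 <= 1) by nra. replace ((t*u)^2) with (t^2*u^2) by ring.
    assert (0 <= u^2) by nra. nra. }
  assert (Hsi0 : 0 <= si).
  { set (v := t*u) in *. assert (v^3 <= v) by (replace (v^3) with (v*(v*v)) by ring; nra). lra. }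
  set (v := t*u) in *. set (w := a*u) in *. assert (Hvdef : v = t*u) by reflexivity. assert (Hwdef : w = a*u) by reflexivity. clearbody v w.
  assert (Hw : 0 <= w <= u) by (subst w; split; [apply Rmult_le_pos; lra| nra]).
  assert (Hv : 0 <= v <= u) by (subst v; split; [apply Rmult_le_pos; lra| nra]).
  assert (Hw2 : w^2 <= u^2) by (simpl; nra).
  assert (Hv2 : v^2 <= u^2) by (simpl; nra).
  assert (Hv3 : v^3 <= v^2) by (simpl; nra).
  assert (Hwv : w*v <= u^2) by (simpl; nra).
  assert (Hwv2 : 0 <= w*v^2) by (apply Rmult_le_pos; [lra| apply pow2_ge_0]).
  assert (Hwv3 : 0 <= w*v^3) by (apply Rmult_le_pos; [lra| apply pow_le; lra]).
  assert (Hum0 : 0 <= u - m) by lra.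
  assert (HEle1 : E <= 1) by (assert (0 <= E*w) by (apply Rmult_le_pos; lra); subst w; lra).
  assert (Ham1 : 0 <= a*(u-m) <= u - m) by (split; [apply Rmult_le_pos|]; nra).
  assert (Htm1 : 0 <= t*(u-m) <= u - m) by (split; [apply Rmult_le_pos|]; nra).
  split; apply Rabs_le; split.
  - assert (E*co <= E) by (rewrite <- (Rmult_1_r E) at 2; apply Rmult_le_compat_l; lra).
    subst w; lra.
  - assert (0 <= 1 - v^2/2) by nra.
    assert (E*co >= E*(1 - v^2/2)) by (apply Rle_ge, Rmult_le_compat_l; lra).
    assert (E*(1 - v^2/2) >= (1 - w)*(1 - v^2/2)) by (apply Rle_ge, Rmult_le_compat_r; lra).
    assert ((1 - w)*(1 - v^2/2) = 1 - w - v^2/2 + w*v^2/2) by field.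
    subst w; lra.
  - assert (E*si >= (1-w)*si) by (apply Rle_ge, Rmult_le_compat_r; lra).
    assert ((1-w)*si >= (1-w)*(v - v^3/6)) by (apply Rle_ge, Rmult_le_compat_l; lra).
    assert ((1-w)*(v - v^3/6) = v - v^3/6 - w*v + w*v^3/6) by field.
    subst v; lra.
  - assert (E*si <= si) by (rewrite <- (Rmult_1_l si) at 2; apply Rmult_le_compat_r; lra).
    subst v; lra.
Qed.

Lemma step sg t x : 1/2 < sg < 1 -> 0 <= t <= 1 -> 1 <= x ->
  Rabs ((1-sg)*exp(-sg*ln (x+1))*cos(t*ln (x+1)) - t*exp(-sg*ln (x+1))*sin(t*ln (x+1))
        - exp((1-sg)*ln (x+1))*cos(t*ln (x+1)) + exp((1-sg)*ln x)*cos(t*ln x))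
    <= 12/sg*(exp(-sg*ln x) - exp(-sg*ln (x+1)))
  /\
  Rabs (-((1-sg)*exp(-sg*ln (x+1))*sin(t*ln (x+1))) - t*exp(-sg*ln (x+1))*cos(t*ln (x+1))
        + exp((1-sg)*ln (x+1))*sin(t*ln (x+1)) - exp((1-sg)*ln x)*sin(t*ln x))
    <= 12/sg*(exp(-sg*ln x) - exp(-sg*ln (x+1))).
Proof.
  intros Hsg Ht Hx.
  set (a := 1 - sg).
  set (L := ln x). set (L' := ln (x+1)).
  set (u := L' - L).
  assert (HL : exp L = x) by (apply exp_ln; lra).
  assert (HL' : exp L' = x+1) by (apply exp_ln; lra).
  assert (Hxu : x + 1 = exp u * x).
  { rewrite <- HL', <- HL, <- exp_plus. f_equal. unfold u; ring. }
  assert (Hepos : 0 < exp u) by apply exp_pos.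
  assert (Hu1 : u <= 1/x).
  { pose proof (exp_ineq1_le u). apply (Rmult_le_reg_r x); [lra|].
    unfold Rdiv. rewrite Rmult_1_l, Rinv_l by lra. nra. }
  assert (Hu2 : 1/(x+1) <= u).
  { pose proof (exp_ineq1_le (-u)). rewrite exp_Ropp in H.
    assert (/exp u = x/(x+1)).
    { rewrite Hxu. field. lra. }
    rewrite H0 in H. 
    assert (1 - u <= x/(x+1)) by lra.
    assert (x/(x+1) = 1 - 1/(x+1)) by (field; lra). lra. }
  set (m := /(x+1)).
  assert (Hm : 0 < m <= 1/2).
  { unfold m. split. apply Rinv_0_lt_compat; lra.
    apply (Rmult_le_reg_r (x+1)); [lra|]. rewrite Rinv_l by lra. lra. }
  assert (Hxm : 1/x <= 2*m).
  { unfold m. apply (Rmult_le_reg_r (x*(x+1))); [nra|].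
    field_simplify; try lra. }
  assert (Hxm2 : 1/x - m <= 2*m^2).
  { assert (1/x - m = m*(1/x)) by (unfold m; field; lra).
    rewrite H. replace (2*m^2) with (m*(2*m)) by ring.
    apply Rmult_le_compat_l; lra. }
  assert (Hm1 : 1/(x+1) = m) by (unfold m; field; lra).
  set (p := exp (a*L')).
  assert (Hp : 0 < p) by apply exp_pos.
  set (E := exp (-(a*u))).
  set (c := cos (t*L')). set (d := sin (t*L')).
  set (co := cos (t*u)). set (si := sin (t*u)).
  assert (HE1 : exp (-sg*L') = p*m).
  { unfold p, m. rewrite <- HL', <- exp_Ropp, <- exp_plus. f_equal. unfold a; ring. }
  assert (HE2 : exp (a*L) = p*E).
  { unfold p, E. rewrite <- exp_plus. f_equal. unfold u; ring. }
  assert (Hc : cos (t*L) = c*co + d*si).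
  { replace (t*L) with (t*L' - t*u) by (unfold u; ring). apply cos_minus. }
  assert (Hs : sin (t*L) = d*co - c*si).
  { replace (t*L) with (t*L' - t*u) by (unfold u; ring). rewrite sin_minus. unfold c, d, co, si. ring. }
  assert (Ha : 0 < a < 1/2) by (unfold a; lra).
  assert (HEa : 1 - a*u <= E) by (unfold E; pose proof (exp_ineq1_le (-(a*u))); lra).
  assert (HEb : E*(1+a*u) <= 1).
  { unfold E. pose proof (exp_ineq1_le (a*u)).
    assert (exp (-(a*u)) * exp (a*u) = 1) by (rewrite <- exp_plus; replace (-(a*u) + a*u) with 0 by ring; apply exp_0).
    assert (0 < exp (-(a*u))) by apply exp_pos. nra. }
  assert (Htu : 0 <= t*u <= 1).
  { split. apply Rmult_le_pos; lra. assert (u <= 1). { assert (1/x <= 1). { apply (Rmult_le_reg_r x); [lra|]. field_simplify; lra. } lra. } nra. }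
  destruct (XY_bounds a t u m E co si Ha Ht Hm ltac:(lra) ltac:(lra) ltac:(assert (1/x <= 1) by (apply (Rmult_le_reg_r x); [lra|]; field_simplify; lra); lra) HEa HEb (coslb _ Htu) (sinlb _ Htu)) as [HX HY].
  (* telescoping *)
  assert (Htel : 12*p*m^2 <= 12/sg*(exp(-sg*L) - exp(-sg*L'))).
  { assert (exp (-sg*L) = p*m*exp(sg*u)).
    { rewrite <- HE1, <- exp_plus. f_equal. unfold u; ring. }
    rewrite H. pose proof (exp_ineq1_le (sg*u)).
    assert (p*m*exp(sg*u) - p*m >= p*m*(sg*m)).
    { assert (0 < p*m) by (apply Rmult_lt_0_compat; lra).
      assert (sg*m <= sg*u) by (apply Rmult_le_compat_l; lra).
      assert (p*m*exp(sg*u) - p*m = p*m*(exp(sg*u) - 1)) by ring. rewrite H3.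
      apply Rle_ge, Rmult_le_compat_l; lra. }
    rewrite HE1. unfold Rdiv. 
    replace (12 * p * m^2) with (12 * / sg * (sg * (p*m*m))) by (field; lra).
    apply Rmult_le_compat_l. assert (0 < /sg) by (apply Rinv_0_lt_compat; lra). lra.
    replace (sg*(p*m*m)) with (p*m*(sg*m)) by ring. lra. }
  assert (HcB : Rabs c <= 1) by (apply Rabs_le; apply COS_bound).
  assert (HdB : Rabs d <= 1) by (apply Rabs_le; apply SIN_bound).
  fold L L'. rewrite HE1 in Htel. rewrite HE1, HE2, Hc, Hs.
  split.
  - replace (a * (p * m) * c - t * (p * m) * d - p * c + p * E * (c * co + d * si))
      with (p * (- c * (1 - E*co - a*m) + d * (E*si - t*m))) by ring.
    rewrite Rabs_mult, (Rabs_right p) by lra.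
    apply Rle_trans with (2 := Htel).
    replace (12*p*m^2) with (p*(12*m^2)) by ring.
    apply Rmult_le_compat_l; [lra|].
    eapply Rle_trans; [apply Rabs_triang|].
    rewrite !Rabs_mult, Rabs_Ropp.
    assert (Rabs c * Rabs (1 - E*co - a*m) <= 4*m^2).
    { rewrite <- (Rmult_1_l (4*m^2)). apply Rmult_le_compat; try apply Rabs_pos; lra. }
    assert (Rabs d * Rabs (E*si - t*m) <= 8*m^2).
    { rewrite <- (Rmult_1_l (8*m^2)). apply Rmult_le_compat; try apply Rabs_pos; lra. }
    lra.
  - replace (- (a * (p * m) * d) - t * (p * m) * c + p * d - p * E * (d * co - c * si))
      with (p * (d * (1 - E*co - a*m) + c * (E*si - t*m))) by ring.
    rewrite Rabs_mult, (Rabs_right p) by lra.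
    apply Rle_trans with (2 := Htel).
    replace (12*p*m^2) with (p*(12*m^2)) by ring.
    apply Rmult_le_compat_l; [lra|].
    eapply Rle_trans; [apply Rabs_triang|].
    rewrite !Rabs_mult.
    assert (Rabs d * Rabs (1 - E*co - a*m) <= 4*m^2).
    { rewrite <- (Rmult_1_l (4*m^2)). apply Rmult_le_compat; try apply Rabs_pos; lra. }
    assert (Rabs c * Rabs (E*si - t*m) <= 8*m^2).
    { rewrite <- (Rmult_1_l (8*m^2)). apply Rmult_le_compat; try apply Rabs_pos; lra. }
    lra.
Qed.
Lemma DS_S m s : dirichlet_sum (S m) s = (fst (dirichlet_sum m s) + exp (- fst s * ln (INR (S m))) * cos (snd s * ln (INR (S m))),
   snd (dirichlet_sum m s) - exp (- fst s * ln (INR (S m))) * sin (snd s * ln (INR (S m)))).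
Proof. cbn [dirichlet_sum]. unfold Cplus, nat_cpow_neg, Re, Im. cbn [fst snd]. f_equal; try ring. Qed.
Lemma DS_0 s : dirichlet_sum 0 s = (0,0).
Proof. reflexivity. Qed.
Lemma Cmod2 z : Cmod z ^ 2 = fst z ^2 + snd z ^2.
Proof. unfold Cmod. rewrite pow2_sqrt; auto. apply Rplus_le_le_0_compat; apply pow2_ge_0. Qed.

Lemma PQ_bound sg t n : 1/2 < sg < 1 -> 0 <= t <= 1 ->
  Rabs ((1-sg)*fst (dirichlet_sum (S n) (sg,t)) + t*snd (dirichlet_sum (S n) (sg,t))
        - exp((1-sg)*ln (INR (S n)))*cos(t*ln (INR (S n))))
    <= 1 + 12/sg*(1 - exp(-sg*ln (INR (S n))))
  /\
  Rabs ((1-sg)*snd (dirichlet_sum (S n) (sg,t)) - t*fst (dirichlet_sum (S n) (sg,t))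
        + exp((1-sg)*ln (INR (S n)))*sin(t*ln (INR (S n))))
    <= 1 + 12/sg*(1 - exp(-sg*ln (INR (S n)))).
Proof.
  intros Hsg Ht. induction n as [|n IH].
  - rewrite DS_S. cbn [fst snd]. rewrite INR_1, ln_1.
    rewrite !Rmult_0_r, exp_0, cos_0, sin_0.
    replace (1-1) with 0 by ring. rewrite Rmult_0_r. rewrite DS_0. cbn [fst snd]. split; apply Rabs_le; split; nra.
  - rewrite DS_S. cbn [fst snd].
    rewrite (S_INR (S n)).
    assert (Hx : 1 <= INR (S n)) by (rewrite S_INR; pose proof (pos_INR n); lra).
    destruct (step sg t (INR (S n)) Hsg Ht Hx) as [H1 H2].
    destruct IH as [I1 I2].
    set (x := INR (S n)) in *.
    set (A := fst (dirichlet_sum (S n) (sg, t))) in *.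
    set (B := snd (dirichlet_sum (S n) (sg, t))) in *.
    split.
    + match goal with |- Rabs ?e <= _ =>
        replace e with (((1 - sg) * A + t * B - exp ((1 - sg) * ln x) * cos (t * ln x)) +
          ((1-sg)*exp(-sg*ln (x+1))*cos(t*ln (x+1)) - t*exp(-sg*ln (x+1))*sin(t*ln (x+1))
        - exp((1-sg)*ln (x+1))*cos(t*ln (x+1)) + exp((1-sg)*ln x)*cos(t*ln x))) by ring end.
      eapply Rle_trans; [apply Rabs_triang|]. lra.
    + match goal with |- Rabs ?e <= _ =>
        replace e with (((1-sg)*B - t*A + exp((1-sg)*ln x)*sin(t*ln x)) +
          (-((1-sg)*exp(-sg*ln (x+1))*sin(t*ln (x+1))) - t*exp(-sg*ln (x+1))*cos(t*ln (x+1))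
        + exp((1-sg)*ln (x+1))*sin(t*ln (x+1)) - exp((1-sg)*ln x)*sin(t*ln x))) by ring end.
      eapply Rle_trans; [apply Rabs_triang|]. lra.
Qed.

Lemma pointwise sg t n : 1/2 < sg < 1 -> 0 <= t <= 1 ->
  Rabs (Cmod (dirichlet_sum (S n) (sg,t)) ^ 2 / exp (2*(1-sg)*ln (INR (S n))) - / ((1-sg)^2 + t^2))
  <= 1350 / (1-sg)^2 / exp ((1-sg)*ln (INR (S n))).
Proof.
  intros Hsg Ht.
  destruct (PQ_bound sg t n Hsg Ht) as [HP HQ].
  rewrite Cmod2.
  set (x := INR (S n)) in *.
  set (A := fst (dirichlet_sum (S n) (sg, t))) in *.
  set (B := snd (dirichlet_sum (S n) (sg, t))) in *.
  assert (Hx : 1 <= x) by (unfold x; rewrite S_INR; pose proof (pos_INR n); lra).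
  assert (Hlx : 0 <= ln x).
  { destruct (Req_dec x 1) as [->|Hne]. rewrite ln_1; lra.
    left. rewrite <- ln_1. apply ln_increasing; lra. }
  assert (He : 0 < exp (-sg * ln x)) by apply exp_pos.
  assert (H12 : 12/sg*(1 - exp(-sg*ln x)) <= 24).
  { assert (12/sg < 24). { apply (Rmult_lt_reg_r sg); [lra|]. field_simplify; lra. }
    assert (0 < 12/sg) by (apply Rdiv_lt_0_compat; lra).
    assert (12/sg*(1 - exp(-sg*ln x)) <= 12/sg*1) by (apply Rmult_le_compat_l; lra). lra. }
  set (a := 1 - sg) in *.
  set (q := exp (a * ln x)) in *.
  assert (Hq : 1 <= q).
  { unfold q. pose proof (exp_ineq1_le (a*ln x)). assert (0 <= a * ln x) by (apply Rmult_le_pos; unfold a; lra). lra. }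
  assert (Hq2 : exp (2*a*ln x) = q^2).
  { unfold q. simpl. rewrite Rmult_1_r, <- exp_plus. f_equal. ring. }
  rewrite Hq2.
  set (c := cos (t*ln x)) in *. set (d := sin (t*ln x)) in *.
  set (P := a*A + t*B - q*c) in *. set (Q := a*B - t*A + q*d) in *.
  assert (HcB : Rabs c <= 1) by (apply Rabs_le; apply COS_bound).
  assert (HdB : Rabs d <= 1) by (apply Rabs_le; apply SIN_bound).
  assert (Hcd : c^2 + d^2 = 1) by (unfold c, d; rewrite <- (sin2_cos2 (t*ln x)); unfold Rsqr; ring).
  assert (Ha : 0 < a < 1/2) by (unfold a; lra).
  assert (Hat : 0 < a^2 + t^2) by nra.
  set (D := (a^2+t^2)*(A^2+B^2) - q^2).
  assert (HD : D = 2*q*(c*P - d*Q) + P^2 + Q^2).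
  { unfold D, P, Q. replace (q^2) with (q^2*(c^2+d^2)) at 1 by (rewrite Hcd; ring). ring. }
  assert (HPb : Rabs P <= 25) by lra.
  assert (HQb : Rabs Q <= 25) by lra.
  assert (HDb : Rabs D <= 1350 * q).
  { rewrite HD.
    assert (Rabs (c*P) <= 25) by (rewrite Rabs_mult; rewrite <- (Rmult_1_l 25); apply Rmult_le_compat; try apply Rabs_pos; lra).
    assert (Rabs (d*Q) <= 25) by (rewrite Rabs_mult; rewrite <- (Rmult_1_l 25); apply Rmult_le_compat; try apply Rabs_pos; lra).
    assert (Rabs (c*P - d*Q) <= 50) by (unfold Rminus; eapply Rle_trans; [apply Rabs_triang|]; rewrite Rabs_Ropp; lra).
    assert (P^2 <= 625) by (assert (-25 <= P <= 25) by (split; [pose proof (Rle_abs (-P)); rewrite Rabs_Ropp in *; lra | pose proof (Rle_abs P); lra]); nra).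
    assert (Q^2 <= 625) by (assert (-25 <= Q <= 25) by (split; [pose proof (Rle_abs (-Q)); rewrite Rabs_Ropp in *; lra | pose proof (Rle_abs Q); lra]); nra).
    assert (0 <= P^2) by apply pow2_ge_0.
    assert (0 <= Q^2) by apply pow2_ge_0.
    assert (Rabs (2*q*(c*P - d*Q)) <= 100*q).
    { rewrite Rabs_mult, Rabs_right by lra. nra. }
    eapply Rle_trans; [apply Rabs_triang|].
    rewrite (Rabs_right (Q^2)) by lra.
    eapply Rle_trans; [apply Rplus_le_compat_r, Rabs_triang|].
    rewrite (Rabs_right (P^2)) by lra. lra. }
  replace ((A^2+B^2)/q^2 - /(a^2+t^2)) with (D / ((a^2+t^2)*q^2)) by (unfold D; field; lra).
  assert (Hden : 0 < (a^2+t^2)*q^2) by (apply Rmult_lt_0_compat; [lra| apply pow_lt; lra]).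
  unfold Rdiv. rewrite Rabs_mult, Rabs_inv.
  rewrite (Rabs_right ((a^2+t^2)*q^2)) by lra.
  assert (0 < /((a^2+t^2)*q^2)) by (apply Rinv_0_lt_compat; lra).
  apply Rle_trans with (1350*q * /((a^2+t^2)*q^2)).
  { apply Rmult_le_compat_r; lra. }
  replace (1350*q * /((a^2+t^2)*q^2)) with (1350 * /q * /(a^2+t^2)) by (field; lra).
  replace (1350 * / a^2 * / q) with (1350 * /q * /a^2) by ring.
  apply Rmult_le_compat_l. assert (0 < /q) by (apply Rinv_0_lt_compat; lra). lra.
  apply Rinv_le_contravar. apply pow_lt; lra. assert (0 <= t^2) by apply pow2_ge_0. lra.
Qed.

Lemma ex_der_DS sg n : forall t, ex_derive (fun t => fst (dirichlet_sum n (sg,t))) t /\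
  ex_derive (fun t => snd (dirichlet_sum n (sg,t))) t.
Proof.
  induction n as [|n IH]; intros t.
  - split; (eapply ex_derive_ext; [intros; rewrite DS_0; reflexivity| apply ex_derive_const]).
  - set (L := ln (INR (S n))).
    split.
    + apply (ex_derive_ext (fun t => fst (dirichlet_sum n (sg, t)) + exp (- sg * L) * cos (t * L))).
      { intros; rewrite DS_S; reflexivity. }
      apply (ex_derive_plus (fun t => fst (dirichlet_sum n (sg, t)))). apply IH.
      auto_derive; auto.
    + apply (ex_derive_ext (fun t => snd (dirichlet_sum n (sg, t)) + - (exp (- sg * L) * sin (t * L)))).
      { intros; rewrite DS_S; reflexivity. }
      apply (ex_derive_plus (fun t => snd (dirichlet_sum n (sg, t)))). apply IH.
      auto_derive; auto.
Qed.

Lemma cont_g sg n z : continuous (fun t => Cmod (dirichlet_sum n (sg,t)) ^ 2) z.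
Proof.
  destruct (ex_der_DS sg n z) as [Hf Hg].
  assert (H := ex_derive_plus _ _ _ (ex_derive_pow _ 2 _ Hf) (ex_derive_pow _ 2 _ Hg)).
  apply ex_derive_continuous in H.
  eapply continuous_ext; [|exact H]. intros; simpl. symmetry; apply Cmod2.
Qed.

Lemma ex_RInt_g sg n : ex_RInt (fun t => Cmod (dirichlet_sum n (sg,t)) ^ 2) 0 1.
Proof.
  apply (ex_RInt_continuous (V:=R_CompleteNormedModule)). intros z _.
  apply cont_g.
Qed.

Lemma RInt_atan a : 0 < a -> is_RInt (fun t => / (a^2 + t^2)) 0 1 (/ a * atan (/ a)).
Proof.
  intros Ha.
  replace (/ a * atan (/ a)) with (minus (/ a * atan (1 / a)) (/ a * atan (0 / a))).
  2:{ unfold minus, plus, opp; simpl. replace (0/a) with 0 by (field; lra). rewrite atan_0.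
      replace (1/a) with (/a) by (field; lra). ring. }
  apply (is_RInt_derive (fun t => / a * atan (t / a))).
  - intros x _.
    assert (Hd : is_derive (fun t => t / a) x (/ a)).
    { auto_derive; auto. field. lra. }
    assert (Ha2 := is_derive_comp atan (fun t => t / a) x _ _ (proj2 (is_derive_Reals _ _ _) (derivable_pt_lim_atan (x / a))) Hd).
    assert (H3 := is_derive_scal _ _ (/ a) _ Ha2).
    cbv beta.
    replace (/ (a^2 + x^2)) with (/a * scal (/a) (/(1 + (x/a)^2))). exact H3.
    unfold scal; simpl; unfold mult; simpl. field. split; [|lra]. assert (0 < a*a) by nra. assert (0 <= x*x) by nra. lra.
  - intros x _.
    apply (ex_derive_continuous (K:=R_AbsRing) (V:=R_NormedModule)).
    auto_derive. assert (0 < a^2) by (apply pow_lt; lra). assert (0 <= x^2) by apply pow2_ge_0. lra.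
Qed.

Theorem corollary5p6 (sigma : R) (Hs1 : 1/2 < sigma) (Hs2 : sigma < 1) :
  exists (K : R) (N : nat), 0 < K /\
    forall n : nat, (N <= n)%nat ->
      Rabs (RInt (fun t => (Cmod (dirichlet_sum n (sigma, t))) ^ 2) 0 1
              / Rpower (INR n) (2 * (1 - sigma))
            - / (1 - sigma) * atan (/ (1 - sigma)))
      <= K / Rpower (INR n) (2 * (1 - sigma) / 3).
Proof.
  assert (Ha : 0 < 1 - sigma) by lra.
  assert (Ha2 : 0 < (1 - sigma)^2) by (apply pow_lt; lra).
  exists (1350 / (1 - sigma)^2), 1%nat. split.
  { apply Rdiv_lt_0_compat; lra. }
  intros n Hn. destruct n as [|n]; [lia|].
  set (g := fun t => Cmod (dirichlet_sum (S n) (sigma, t)) ^ 2).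
  set (Q := Rpower (INR (S n)) (2 * (1 - sigma))).
  assert (HQ : 0 < Q) by (unfold Q, Rpower; apply exp_pos).
  assert (HI := is_RInt_minus _ _ 0 1 _ _ (is_RInt_scal _ 0 1 (/ Q) _ (RInt_correct _ 0 1 (ex_RInt_g sigma (S n)))) (RInt_atan (1 - sigma) Ha)).
  assert (Heq : RInt g 0 1 / Q - / (1 - sigma) * atan (/ (1 - sigma)) =
     RInt (fun y => minus (scal (/ Q) (Cmod (dirichlet_sum (S n) (sigma, y)) ^ 2)) (/ ((1 - sigma)^2 + y^2))) 0 1).
  { symmetry. apply is_RInt_unique.
    replace (RInt g 0 1 / Q - / (1 - sigma) * atan (/ (1 - sigma))) with
      (minus (scal (/ Q) (RInt g 0 1)) (/ (1 - sigma) * atan (/ (1 - sigma)))).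
    exact HI.
    unfold minus, plus, opp, scal; simpl. unfold mult; simpl. unfold Rdiv. ring. }
  rewrite Heq.
  eapply Rle_trans.
  { apply abs_RInt_le_const. lra.
    exists (minus (scal (/ Q) (RInt g 0 1)) (/ (1 - sigma) * atan (/ (1 - sigma)))). exact HI.
    intros t Ht.
    assert (Hp := pointwise sigma t n (conj Hs1 Hs2) Ht).
    cbv beta.
    match goal with |- Rabs ?e <= _ =>
    replace e
      with (Cmod (dirichlet_sum (S n) (sigma, t)) ^ 2 / exp (2 * (1 - sigma) * ln (INR (S n))) -
        / ((1 - sigma) ^ 2 + t ^ 2)) end.
    exact Hp.
    unfold Q, Rpower.
    change (Cmod (dirichlet_sum (S n) (sigma, t)) ^ 2 / exp (2 * (1 - sigma) * ln (INR (S n))) -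
        / ((1 - sigma) ^ 2 + t ^ 2) = / exp (2 * (1 - sigma) * ln (INR (S n))) * Cmod (dirichlet_sum (S n) (sigma, t)) ^ 2 + - / ((1 - sigma) ^ 2 + t ^ 2)).
    unfold Rdiv. ring. }
  rewrite Rminus_0_r, Rmult_1_l.
  change (exp ((1 - sigma) * ln (INR (S n)))) with (Rpower (INR (S n)) (1 - sigma)).
  unfold Rdiv. apply Rmult_le_compat_l.
  { apply Rmult_le_pos; [lra|]. left; apply Rinv_0_lt_compat; lra. }
  apply Rinv_le_contravar.
  { unfold Rpower; apply exp_pos. }
  apply Rle_Rpower. rewrite S_INR; pose proof (pos_INR n); lra. lra.
Qed.
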